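(* Let $K\ge1$, fix $t_1,t_2\in\mathbb C$, and let $M\in\mathcal M$. If $D(M)<2K^2-3K$ then $\det M=0$. If $D(M)=2K^2-3K$ and $\det M\ne0$, then the column degrees $D_1(M),\dots,D_{2K}(M)$ are, in some order, exactly the distinct values $-1,0,1,\dots,2K-2$.
   Context: For integers $r$ and nonnegative integers $E,G$ define \[ I(r,E,G)=\frac{1}{2\pi i}\oint_{|u|=2}\frac{u^r\exp\left(\frac{t_1}{u-1}+\frac{t_2}{u+1}\right)}{(u-1)^E(u+1)^G}\,du \] (positively oriented circle). Let $\mathcal M=\mathcal M_{2K}$ be the set of $2K\times 2K$ matrices $M=(M_{i,j})$ with $M_{i,j}=I(c_j+r_i,E_j,G_j)$, where $r_1,\dots,r_{2K},c_1,\dots,c_{2K}\in\mathbb Z$ and $E_j,G_j$ are nonnegative integers. The degree of the entry $M_{i,j}$ is $d_{i,j}=c_j+r_i-E_j-G_j$, the degree of column $J$ is $D_J(M)=\max_i d_{i,J}$, and the total degree is $D(M)=\sum_{J=1}^{2K}D_J(M)$. *)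

(* Defs.v *)
From Stdlib Require Import Reals ZArith ClassicalEpsilon.
From mathcomp Require Import all_boot all_fingroup.
Set Implicit Arguments. Unset Strict Implicit. Unset Printing Implicit Defensive.
Local Open Scope R_scope.

Definition Cplx : Type := (R * R)%type.
Definition C0 : Cplx := (0, 0).
Definition C1 : Cplx := (1, 0).
Definition RtoC (x : R) : Cplx := (x, 0).
Definition Cadd (z w : Cplx) : Cplx := (fst z + fst w, snd z + snd w).
Definition Copp (z : Cplx) : Cplx := (- fst z, - snd z).
Definition Csub (z w : Cplx) : Cplx := Cadd z (Copp w).
Definition Cmul (z w : Cplx) : Cplx :=
  (fst z * fst w - snd z * snd w, fst z * snd w + snd z * fst w).
Definition Cinv (z : Cplx) : Cplx :=
  (fst z / (fst z * fst z + snd z * snd z),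
   - snd z / (fst z * fst z + snd z * snd z)).
Definition Cdiv (z w : Cplx) : Cplx := Cmul z (Cinv w).
Definition Cexp (z : Cplx) : Cplx := (exp (fst z) * cos (snd z), exp (fst z) * sin (snd z)).
Fixpoint Cpown (z : Cplx) (n : nat) : Cplx :=
  match n with O => C1 | S m => Cmul z (Cpown z m) end.
Definition Cpowz (z : Cplx) (r : Z) : Cplx :=
  match r with
  | Z0 => C1
  | Zpos p => Cpown z (Pos.to_nat p)
  | Zneg p => Cinv (Cpown z (Pos.to_nat p))
  end.

Definition integrand (t1 t2 : Cplx) (r : Z) (E G : nat) (u : Cplx) : Cplx :=
  Cdiv (Cmul (Cpowz u r)
             (Cexp (Cadd (Cdiv t1 (Csub u C1)) (Cdiv t2 (Cadd u C1)))))
       (Cmul (Cpown (Csub u C1) E) (Cpown (Cadd u C1) G)).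

(* Value of the Riemann integral of f over [a,b] (0 if not integrable;
   the functions used below are continuous, hence integrable). *)
Definition RInt (f : R -> R) (a b : R) : R :=
  epsilon (inhabits R0)
    (fun v : R => exists pr : Riemann_integrable f a b, RiemannInt pr = v).

(* Contour integral (1/(2 pi i)) \oint_{|u|=2} f(u) du, with the positively
   oriented parametrization u(th) = 2 e^{i th}, th in [0, 2 pi], du = i u dth,
   so that it equals (1/(2 pi)) \int_0^{2pi} f(u(th)) u(th) dth. *)
Definition circ (th : R) : Cplx := (2 * cos th, 2 * sin th).
Definition contour_int2 (f : Cplx -> Cplx) : Cplx :=
  let g := fun th => Cmul (f (circ th)) (circ th) in
  (RInt (fun th => fst (g th)) 0 (2 * PI) / (2 * PI),
   RInt (fun th => snd (g th)) 0 (2 * PI) / (2 * PI)).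

Definition Iint (t1 t2 : Cplx) (r : Z) (E G : nat) : Cplx :=
  contour_int2 (integrand t1 t2 r E G).

Definition Cdet (n : nat) (A : 'I_n -> 'I_n -> Cplx) : Cplx :=
  \big[Cadd/C0]_(s : 'S_n)
     Cmul (if odd_perm s then Copp C1 else C1) (\big[Cmul/C1]_(i < n) A i (s i)).

Definition entry_deg (n : nat) (r c : 'I_n -> Z) (E G : 'I_n -> nat)
  (i j : 'I_n) : Z := (c j + r i - Z.of_nat (E j) - Z.of_nat (G j))%Z.

(* D_J(M) = max_i d_{i,J}  (n >= 1 in our use; value 0 for n = 0). *)
Definition col_deg (n : nat) (r c : 'I_n -> Z) (E G : 'I_n -> nat) (j : 'I_n) : Z :=
  match enum 'I_n with
  | [::] => 0%Z
  | i0 :: _ => \big[Z.max/entry_deg r c E G i0 j]_(i < n) entry_deg r c E G i j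
  end.

Definition tot_deg (n : nat) (r c : 'I_n -> Z) (E G : 'I_n -> nat) : Z :=
  \big[Z.add/0%Z]_(j < n) col_deg r c E G j.

(* Main.v *)
Require Import Defs.
From HB Require Import structures.
From Stdlib Require Import Reals ZArith Lra Lia Psatz ClassicalEpsilon FunctionalExtensionality Classical.
From Coquelicot Require Import Hierarchy Continuity Derive RInt Rcomplements ElemFct RInt_analysis.
From mathcomp Require Import all_boot all_fingroup.
Set Implicit Arguments. Unset Strict Implicit. Unset Printing Implicit Defensive.
Set Bullet Behavior "Strict Subproofs".

Open Scope R_scope.

Lemma cplx_eq (z w : Cplx) : fst z = fst w -> snd z = snd w -> z = w.
Proof. by case: z => a b; case: w => c d /= -> ->. Qed.

Definition CD (g : R -> Cplx) (t : R) (v : Cplx) :=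
  is_derive (fun s => fst (g s)) t (fst v) /\ is_derive (fun s => snd (g s)) t (snd v).
Definition C2 (g : R -> R -> Cplx) x y :=
  continuity_2d_pt (fun a b => fst (g a b)) x y /\ continuity_2d_pt (fun a b => snd (g a b)) x y.

Lemma isd_eq (f : R -> R) (x l l' : R) : is_derive f x l -> l = l' -> is_derive f x l'.
Proof. by move=> H <-. Qed.

Lemma CD_eq g t v w : CD g t v -> v = w -> CD g t w.
Proof. by move=> H <-. Qed.

Lemma CD_const (c : Cplx) t : CD (fun _ => c) t C0.
Proof. split; apply: (isd_eq (is_derive_const _ _)); reflexivity. Qed.

Lemma CD_add f g t a b : CD f t a -> CD g t b -> CD (fun s => Cadd (f s) (g s)) t (Cadd a b).
Proof.
move=> [H1 H2] [H3 H4]; split; simpl.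
- exact: (is_derive_plus _ _ _ _ _ H1 H3).
- exact: (is_derive_plus _ _ _ _ _ H2 H4).
Qed.

Lemma CD_opp f t a : CD f t a -> CD (fun s => Copp (f s)) t (Copp a).
Proof.
move=> [H1 H2]; split; simpl.
- exact: (is_derive_opp _ _ _ H1).
- exact: (is_derive_opp _ _ _ H2).
Qed.

Lemma isd_mul (f g : R -> R) t a b : is_derive f t a -> is_derive g t b ->
  is_derive (fun s => f s * g s) t (a * g t + f t * b).
Proof.
move=> H1 H2; exact: (Derive.is_derive_mult f g t a b H1 H2).

Qed.

Lemma CD_mul f g t a b : CD f t a -> CD g t b ->
  CD (fun s => Cmul (f s) (g s)) t (Cadd (Cmul a (g t)) (Cmul (f t) b)).
Proof.
move=> [H1 H2] [H3 H4]; split; simpl.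
- apply: (isd_eq (is_derive_minus _ _ _ _ _ (isd_mul H1 H3) (isd_mul H2 H4))).
  rewrite /minus /plus /opp /=; ring.
- apply: (isd_eq (is_derive_plus _ _ _ _ _ (isd_mul H1 H4) (isd_mul H2 H3))).
  rewrite /plus /=; ring.
Qed.

Definition Nm (z : Cplx) := fst z * fst z + snd z * snd z.

Lemma Nm_eq0 z : Nm z = 0 -> z = C0.
Proof. rewrite /Nm => H; apply: cplx_eq; simpl; nra. Qed.

Lemma Nm_neq0 z : z <> C0 -> Nm z <> 0.
Proof. by move=> H H'; apply: H; apply: Nm_eq0. Qed.

Lemma isd_inv (f : R -> R) t a : is_derive f t a -> f t <> 0 ->
  is_derive (fun s => / f s) t (- a / (f t)^2).
Proof. move=> H1 H2; exact: is_derive_inv. Qed.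

Lemma CD_inv f t a : CD f t a -> f t <> C0 ->
  CD (fun s => Cinv (f s)) t (Copp (Cmul a (Cinv (Cmul (f t) (f t))))).
Proof.
move=> [H1 H2] Hn; have HN := Nm_neq0 Hn.
have HD : is_derive (fun s => fst (f s) * fst (f s) + snd (f s) * snd (f s)) t
   (2 * fst (f t) * fst a + 2 * snd (f t) * snd a).
  apply: (isd_eq (is_derive_plus _ _ _ _ _ (isd_mul H1 H1) (isd_mul H2 H2))).
  rewrite /plus /=; ring.
have HI := isd_inv HD HN.
rewrite /Nm in HN.
have HN2 : (fst (f t) * fst (f t) - snd (f t) * snd (f t)) * (fst (f t) * fst (f t) - snd (f t) * snd (f t)) + (fst (f t) * snd (f t) + snd (f t) * fst (f t)) * (fst (f t) * snd (f t) + snd (f t) * fst (f t)) <> 0.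
  move=> H; apply: HN; nra.
split; rewrite /Cinv /=.
- apply: (isd_eq (isd_mul H1 HI)).
  move: HN HN2; set x := fst (f t); set y := snd (f t); set p := fst a; set q := snd a => HN HN2.
  field; split => //.
- apply: (isd_eq (isd_mul (is_derive_opp _ _ _ H2) HI)).
  rewrite /opp /=.
  move: HN HN2; set x := fst (f t); set y := snd (f t); set p := fst a; set q := snd a => HN HN2.
  field; split => //.
Qed.

Lemma CD_exp f t a : CD f t a ->
  CD (fun s => Cexp (f s)) t (Cmul (Cexp (f t)) a).
Proof.
move=> [H1 H2].
have E1 : is_derive (fun s => exp (fst (f s))) t (exp (fst (f t)) * fst a).
  apply: (isd_eq (is_derive_comp _ _ _ _ _ (is_derive_exp _) H1)).
  rewrite /scal /= /mult /=; ring.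
have C1' : is_derive (fun s => cos (snd (f s))) t (- sin (snd (f t)) * snd a).
  apply: (isd_eq (is_derive_comp _ _ _ _ _ (is_derive_cos _) H2)).
  rewrite /scal /= /mult /=; ring.
have S1 : is_derive (fun s => sin (snd (f s))) t (cos (snd (f t)) * snd a).
  apply: (isd_eq (is_derive_comp _ _ _ _ _ (is_derive_sin _) H2)).
  rewrite /scal /= /mult /=; ring.
split; rewrite /Cexp /=.
- apply: (isd_eq (isd_mul E1 C1')); ring.
- apply: (isd_eq (isd_mul E1 S1)); ring.
Qed.


Ltac cring := apply: cplx_eq; rewrite /Cmul /Cadd /Copp /Csub /C0 /Defs.C1 /=; ring.

Lemma C2_const (c : Cplx) x y : C2 (fun _ _ => c) x y.
Proof. split; exact: continuity_2d_pt_const. Qed.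

Lemma C2_add f g x y : C2 f x y -> C2 g x y -> C2 (fun a b => Cadd (f a b) (g a b)) x y.
Proof. move=> [H1 H2] [H3 H4]; split; exact: continuity_2d_pt_plus. Qed.

Lemma C2_opp f x y : C2 f x y -> C2 (fun a b => Copp (f a b)) x y.
Proof. move=> [H1 H2]; split; exact: continuity_2d_pt_opp. Qed.

Lemma C2_mul f g x y : C2 f x y -> C2 g x y -> C2 (fun a b => Cmul (f a b) (g a b)) x y.
Proof.
move=> [H1 H2] [H3 H4]; split; rewrite /Cmul /=.
- apply: continuity_2d_pt_minus; exact: continuity_2d_pt_mult.
- apply: continuity_2d_pt_plus; exact: continuity_2d_pt_mult.
Qed.

Lemma C2_inv f x y : C2 f x y -> f x y <> C0 -> C2 (fun a b => Cinv (f a b)) x y.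
Proof.
move=> [H1 H2] Hn; have HN := Nm_neq0 Hn; rewrite /Nm in HN.
have HD : continuity_2d_pt (fun a b => fst (f a b) * fst (f a b) + snd (f a b) * snd (f a b)) x y.
  apply: continuity_2d_pt_plus; exact: continuity_2d_pt_mult.
have HI := continuity_2d_pt_inv _ _ _ HD HN.
split; rewrite /Cinv /=.
- exact: continuity_2d_pt_mult.
- apply: continuity_2d_pt_mult => //; exact: continuity_2d_pt_opp.
Qed.

Lemma C2_exp f x y : C2 f x y -> C2 (fun a b => Cexp (f a b)) x y.
Proof.
move=> [H1 H2]; split; rewrite /Cexp /=; apply: continuity_2d_pt_mult.
- apply: continuity_1d_2d_pt_comp => //; apply: derivable_continuous_pt; apply: derivable_pt_exp.
- apply: continuity_1d_2d_pt_comp => //; apply: derivable_continuous_pt; apply: derivable_pt_cos.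
- apply: continuity_1d_2d_pt_comp => //; apply: derivable_continuous_pt; apply: derivable_pt_exp.
- apply: continuity_1d_2d_pt_comp => //; apply: derivable_continuous_pt; apply: derivable_pt_sin.
Qed.

Definition HolD (U : Cplx -> Prop) (P P' : Cplx -> Cplx) := forall g t v,
  U (g t) -> CD g t v -> CD (fun s => P (g s)) t (Cmul (P' (g t)) v).
Definition ContF (U : Cplx -> Prop) (P : Cplx -> Cplx) := forall g x y,
  U (g x y) -> C2 g x y -> C2 (fun a b => P (g a b)) x y.
Definition Hol U P P' := HolD U P P' /\ ContF U P /\ ContF U P'.

Lemma ContF_const U (c : Cplx) : ContF U (fun _ => c).
Proof. move=> g x y _ _; exact: C2_const. Qed.

Lemma Hol_id U : Hol U (fun u => u) (fun _ => Defs.C1).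
Proof.
split; [|split; [by move=> g x y _ H|exact: ContF_const]].
move=> g t v _ H; apply: CD_eq H _; cring.
Qed.

Lemma Hol_const U c : Hol U (fun _ => c) (fun _ => C0).
Proof.
split; [|split; exact: ContF_const].
move=> g t v _ _; apply: CD_eq (CD_const c t) _; cring.
Qed.

Lemma Hol_add U P P' Q Q' : Hol U P P' -> Hol U Q Q' ->
  Hol U (fun u => Cadd (P u) (Q u)) (fun u => Cadd (P' u) (Q' u)).
Proof.
move=> [D1 [C1 C1']] [D2 [C2' C2'']]; split; [|split].
- move=> g t v Hu Hg; apply: CD_eq (CD_add (D1 _ _ _ Hu Hg) (D2 _ _ _ Hu Hg)) _; cring.
- move=> g x y Hu Hg; apply: C2_add; [exact: C1|exact: C2'].
- move=> g x y Hu Hg; apply: C2_add; [exact: C1'|exact: C2''].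
Qed.

Lemma Hol_opp U P P' : Hol U P P' ->
  Hol U (fun u => Copp (P u)) (fun u => Copp (P' u)).
Proof.
move=> [D1 [C1 C1']]; split; [|split].
- move=> g t v Hu Hg; apply: CD_eq (CD_opp (D1 _ _ _ Hu Hg)) _; cring.
- move=> g x y Hu Hg; apply: C2_opp; exact: C1.
- move=> g x y Hu Hg; apply: C2_opp; exact: C1'.
Qed.

Lemma Hol_sub U P P' Q Q' : Hol U P P' -> Hol U Q Q' ->
  Hol U (fun u => Csub (P u) (Q u)) (fun u => Cadd (P' u) (Copp (Q' u))).
Proof. move=> H1 H2; rewrite /Csub; exact: Hol_add H1 (Hol_opp H2). Qed.

Lemma Hol_mul U P P' Q Q' : Hol U P P' -> Hol U Q Q' ->
  Hol U (fun u => Cmul (P u) (Q u))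
        (fun u => Cadd (Cmul (P' u) (Q u)) (Cmul (P u) (Q' u))).
Proof.
move=> [D1 [C1 C1']] [D2 [C2' C2'']]; split; [|split].
- move=> g t v Hu Hg; apply: CD_eq (CD_mul (D1 _ _ _ Hu Hg) (D2 _ _ _ Hu Hg)) _; cring.
- move=> g x y Hu Hg; apply: C2_mul; [exact: C1|exact: C2'].
- move=> g x y Hu Hg; apply: C2_add; apply: C2_mul; auto.
Qed.

Lemma Hol_inv U P P' : (forall u, U u -> P u <> C0) -> Hol U P P' ->
  Hol U (fun u => Cinv (P u))
        (fun u => Copp (Cmul (P' u) (Cinv (Cmul (P u) (P u))))).
Proof.
move=> Hn [D1 [C1 C1']]; split; [|split].
- move=> g t v Hu Hg; apply: CD_eq (CD_inv (D1 _ _ _ Hu Hg) (Hn _ Hu)) _.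
  set w := Cinv _; cring.
- move=> g x y Hu Hg; apply: C2_inv; [exact: C1|exact: Hn].
- move=> g x y Hu Hg; apply: C2_opp; apply: C2_mul; [exact: C1'|].
  apply: C2_inv; [apply: C2_mul; exact: C1|].
  move=> H; have := Nm_neq0 (Hn _ Hu); move: H; rewrite /Nm /Cmul /C0.
  case: (P (g x y)) => a b /= [] H1 H2 H3; apply: H3; nra.
Qed.

Lemma Hol_exp U P P' : Hol U P P' ->
  Hol U (fun u => Cexp (P u)) (fun u => Cmul (Cexp (P u)) (P' u)).
Proof.
move=> [D1 [C1 C1']]; split; [|split].
- move=> g t v Hu Hg; apply: CD_eq (CD_exp (D1 _ _ _ Hu Hg)) _; cring.
- move=> g x y Hu Hg; apply: C2_exp; exact: C1.
- move=> g x y Hu Hg; apply: C2_mul; [apply: C2_exp|]; auto.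
Qed.

Lemma Cmul_neq0 z w : z <> C0 -> w <> C0 -> Cmul z w <> C0.
Proof.
move=> Hz Hw H; have Hz' := Nm_neq0 Hz; have Hw' := Nm_neq0 Hw.
have : Nm (Cmul z w) = Nm z * Nm w by rewrite /Nm /Cmul /=; ring.
rewrite H /Nm /C0 /=. move=> E; apply: Hz'. rewrite /Nm in Hw' E * . nra.
Qed.

Lemma Cpown_neq0 z n : z <> C0 -> Cpown z n <> C0.
Proof.
move=> Hz; elim: n => [|n IH] /=.
- rewrite /Defs.C1 /C0; case; lra.
- exact: Cmul_neq0.
Qed.

Lemma Hol_pown U P P' n : Hol U P P' -> exists Q', Hol U (fun u => Cpown (P u) n) Q'.
Proof.
move=> H; elim: n => [|n [Q' IH]] /=.
- eexists; exact: Hol_const.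
- eexists; exact: Hol_mul H IH.
Qed.

Lemma Hol_ext U P Q P' : (forall u, P u = Q u) -> Hol U P P' -> Hol U Q P'.
Proof.
move=> E [D [C1 C1']]; split; [|split].
- move=> g t v Hu Hg; have := D g t v Hu Hg.
  have -> : (fun s => Q (g s)) = (fun s => P (g s)) by apply: functional_extensionality => s; rewrite E.
  done.
- move=> g x y Hu Hg; have := C1 g x y Hu Hg.
  have -> : (fun a b => Q (g a b)) = (fun a b => P (g a b)).
    by apply: functional_extensionality => a; apply: functional_extensionality => b; rewrite E.
  done.
- done.
Qed.


Definition UU (u : Cplx) := 1 < Nm u.

Lemma UU_sub u : UU u -> Csub u Defs.C1 <> C0.
Proof.
rewrite /UU /Nm /Csub /Cadd /Copp /Defs.C1 /C0; case: u => a b /= H [] H1 H2.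
have ha : a = 1 by lra. have hb : b = 0 by lra. rewrite ha hb in H; lra.
Qed.

Lemma UU_add u : UU u -> Cadd u Defs.C1 <> C0.
Proof.
rewrite /UU /Nm /Cadd /Defs.C1 /C0; case: u => a b /= H [] H1 H2.
have ha : a = -1 by lra. have hb : b = 0 by lra. rewrite ha hb in H; lra.
Qed.

Lemma UU_0 u : UU u -> u <> C0.
Proof. rewrite /UU /Nm /C0; case: u => a b /= H [] ha hb; rewrite ha hb in H; lra. Qed.

Lemma Hol_powz r : exists P', Hol UU (fun u => Cpowz u r) P'.
Proof.
case: r => [|p|p].
- eexists; apply: Hol_ext (Hol_const UU Defs.C1) => u; reflexivity.
- have [Q HQ] := Hol_pown (Pos.to_nat p) (Hol_id UU).
  eexists; apply: Hol_ext HQ => u; reflexivity.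
- have [Q HQ] := Hol_pown (Pos.to_nat p) (Hol_id UU).
  eexists; apply: Hol_ext (Hol_inv _ HQ) => //.
  move=> u Hu; apply: Cpown_neq0; exact: UU_0.
Qed.

Lemma Hol_integrand t1 t2 r E G :
  exists P', Hol UU (fun u => Cmul (integrand t1 t2 r E G u) u) P'.
Proof.
have Hu := Hol_id UU.
have Hs := Hol_sub Hu (Hol_const UU Defs.C1).
have Ha := Hol_add Hu (Hol_const UU Defs.C1).
have [P1 H1] := Hol_pown E Hs.
have [P2 H2] := Hol_pown G Ha.
have Hden := Hol_mul H1 H2.
have Hiden := Hol_inv (P := fun u => Cmul (Cpown (Csub u Defs.C1) E) (Cpown (Cadd u Defs.C1) G)) _ Hden.
have Hq1 := Hol_mul (Hol_const UU t1) (Hol_inv (P := fun u => Csub u Defs.C1) UU_sub Hs).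
have Hq2 := Hol_mul (Hol_const UU t2) (Hol_inv (P := fun u => Cadd u Defs.C1) UU_add Ha).
have Hex := Hol_exp (Hol_add Hq1 Hq2).
have [Pz Hz] := Hol_powz r.
have Hnum := Hol_mul Hz Hex.
eexists; apply: Hol_ext (Hol_mul (Hol_mul Hnum (Hiden _)) Hu) => //.
move=> u Hu'; apply: Cmul_neq0; apply: Cpown_neq0; [exact: UU_sub|exact: UU_add].
Qed.


Definition polar (r t : R) : Cplx := (r * cos t, r * sin t).

Lemma polar_UU r t : 1 < r -> UU (polar r t).
Proof.
move=> H; rewrite /UU /Nm /polar /=.
have := sin2_cos2 t; rewrite /Rsqr => E.
have -> : r * cos t * (r * cos t) + r * sin t * (r * sin t) = r * r * (sin t * sin t + cos t * cos t) by ring.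
rewrite E; nra.
Qed.

Lemma CD_polar_r r t : CD (fun s => polar s t) r (cos t, sin t).
Proof.
split; rewrite /polar /=.
- apply: (isd_eq (isd_mul (is_derive_id r) (is_derive_const (cos t) r))).
  rewrite /Hierarchy.one /Hierarchy.zero /=; ring.
- apply: (isd_eq (isd_mul (is_derive_id r) (is_derive_const (sin t) r))).
  rewrite /Hierarchy.one /Hierarchy.zero /=; ring.
Qed.

Lemma CD_polar_t r t : CD (fun s => polar r s) t (- (r * sin t), r * cos t).
Proof.
split; rewrite /polar /=.
- apply: (isd_eq (isd_mul (is_derive_const r t) (is_derive_cos t))).
  rewrite /Hierarchy.one /Hierarchy.zero /=; ring.
- apply: (isd_eq (isd_mul (is_derive_const r t) (is_derive_sin t))).
  rewrite /Hierarchy.one /Hierarchy.zero /=; ring.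
Qed.

Lemma cont_cos2 x y : continuity_2d_pt (fun _ b => cos b) x y.
Proof.
apply: (continuity_1d_2d_pt_comp cos (fun _ b => b)); last exact: continuity_2d_pt_id2.
apply: derivable_continuous_pt; apply: derivable_pt_cos.
Qed.
Lemma cont_sin2 x y : continuity_2d_pt (fun _ b => sin b) x y.
Proof.
apply: (continuity_1d_2d_pt_comp sin (fun _ b => b)); last exact: continuity_2d_pt_id2.
apply: derivable_continuous_pt; apply: derivable_pt_sin.
Qed.

Lemma C2_polar r t : C2 polar r t.
Proof.
split; rewrite /polar /=; apply: continuity_2d_pt_mult;
  (exact: continuity_2d_pt_id1 || exact: cont_cos2 || exact: cont_sin2).
Qed.

Lemma C2_cs r t : C2 (fun _ b => (cos b, sin b)) r t.
Proof. split; [exact: cont_cos2|exact: cont_sin2]. Qed.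

Lemma C2_ics r t : C2 (fun a b => (- (a * sin b), a * cos b)) r t.
Proof.
split => /=; [apply: continuity_2d_pt_opp|];
apply: continuity_2d_pt_mult; (exact: continuity_2d_pt_id1 || exact: cont_cos2 || exact: cont_sin2).
Qed.

Lemma ball_abs (x e y : R) : ball x e y <-> Rabs (y - x) < e.
Proof. rewrite /ball /= /AbsRing_ball /abs /minus /plus /opp /=; split => //. Qed.

Lemma loc_gt1 x (Q : R -> Prop) : 1 < x -> (forall y, 1 < y -> Q y) -> locally x Q.
Proof.
move=> Hx HQ; have Hp : 0 < x - 1 by lra.
exists (mkposreal _ Hp); move=> y /ball_abs /= Hy; apply: HQ.
have [H1 H2] := Rabs_def2 _ _ Hy; lra.
Qed.

Lemma loc2_gt1 x y (Q : R -> R -> Prop) : 1 < x -> (forall u v, 1 < u -> Q u v) -> locally_2d Q x y.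
Proof.
move=> Hx HQ; have Hp : 0 < x - 1 by lra.
exists (mkposreal _ Hp); move=> u v /= Hu _; apply: HQ.
have [H1 H2] := Rabs_def2 _ _ Hu; lra.
Qed.

Lemma cont2_1d (h : R -> R -> R) x y : continuity_2d_pt h x y -> continuous (fun t => h x t) y.
Proof.
move=> H; apply/filterlim_locally => eps.
have [d Hd] := H eps.
exists d; move=> t /ball_abs Ht; apply/ball_abs; apply: Hd => //.
rewrite Rminus_eq_0 Rabs_R0; exact: cond_pos.
Qed.

Lemma contour_fst (P P' : Cplx -> Cplx) B : Hol UU P P' ->
  (forall r t, 2 <= r -> Rabs (fst (P (polar r t))) <= B / r) ->
  RInt (fun t => fst (P (polar 2 t))) 0 (2 * PI) = 0.
Proof.
move=> [HD [HC HC']] HB.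
pose f r t := fst (P (polar r t)).
pose F r := RInt (f r) 0 (2 * PI).
have HR : forall r t, 1 < r -> CD (fun s => P (polar s t)) r (Cmul (P' (polar r t)) (cos t, sin t)).
  move=> r t Hr; apply: HD; [exact: polar_UU|exact: CD_polar_r].
have HT : forall r t, 1 < r -> CD (fun s => P (polar r s)) t (Cmul (P' (polar r t)) (- (r * sin t), r * cos t)).
  move=> r t Hr; apply: HD; [exact: polar_UU|exact: CD_polar_t].
have HC2 : forall r t, 1 < r -> C2 (fun a b => P' (polar a b)) r t.
  move=> r t Hr; apply: (HC' polar); [exact: polar_UU|exact: C2_polar].
have Hct : forall r t, 1 < r -> continuous (f r) t.
  move=> r t Hr; apply: ex_derive_continuous; exists (fst (Cmul (P' (polar r t)) (- (r * sin t), r * cos t))).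
  exact: (HT r t Hr).1.
have Hint : forall r, 1 < r -> ex_RInt (f r) 0 (2 * PI).
  move=> r Hr; apply: ex_RInt_continuous => z _; exact: Hct.
have HA : forall r, 1 < r -> is_derive F r 0.
{ move=> r Hr.
  have H := is_derive_RInt_param f 0 (2 * PI) r.
  apply: (isd_eq (H _ _ _)).
  + apply: loc_gt1 => // y Hy t _; exists (fst (Cmul (P' (polar y t)) (cos t, sin t))).
    exact: (HR y t Hy).1.
  + move=> t _.
    apply: (continuity_2d_pt_ext_loc (fun u v => fst (Cmul (P' (polar u v)) (cos v, sin v)))).
    * apply: loc2_gt1 => // u v Hu; symmetry; apply: is_derive_unique; exact: (HR u v Hu).1.
    * exact: (C2_mul (HC2 r t Hr) (C2_cs r t)).1.
  + apply: loc_gt1 => // y Hy; exact: Hint.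
  + have Hr0 : r <> 0 by lra.
    pose h t := snd (P (polar r t)) * / r.
    pose dh t := snd (Cmul (P' (polar r t)) (- (r * sin t), r * cos t)) * / r.
    have Hh : forall t, is_derive h t (dh t).
      move=> t; apply: (isd_eq (isd_mul (HT r t Hr).2 (is_derive_const (/ r) t))).
      rewrite /Hierarchy.zero /dh /=; ring.
    have Hcd : forall t, continuous dh t.
      move=> t.
      apply: (cont2_1d (h := fun a b => snd (Cmul (P' (polar a b)) (- (a * sin b), a * cos b)) * / a) (x := r)).
      apply: continuity_2d_pt_mult; first exact: (C2_mul (HC2 r t Hr) (C2_ics r t)).2.
      apply: continuity_2d_pt_inv => //; exact: continuity_2d_pt_id1.
    rewrite (RInt_ext _ dh).
    * have HI := is_RInt_derive h dh 0 (2 * PI) (fun t _ => Hh t) (fun t _ => Hcd t).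
      rewrite (is_RInt_unique _ _ _ _ HI) /h /polar cos_2PI sin_2PI cos_0 sin_0.
      rewrite /minus /plus /opp /=; ring.
    * move=> x _; rewrite (is_derive_unique _ _ _ (HR r x Hr).1) /dh /=.
      field => //. }
have HB2 : forall r, 2 <= r -> F r = F 2.
  move=> r Hr; case: (Req_dec r 2) => [->//|Hne].
  have H1 : forall x, Rmin 2 r < x < Rmax 2 r -> is_derive F x ((fun _ => 0) x).
    move=> x; rewrite Rmin_left ?Rmax_right; try lra; move=> Hx; apply: HA; lra.
  have H2 : forall x, Rmin 2 r <= x <= Rmax 2 r -> continuity_pt F x.
    move=> x; rewrite Rmin_left ?Rmax_right; try lra; move=> Hx.
    apply/continuity_pt_filterlim; apply: ex_derive_continuous; exists 0; apply: HA; lra.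
  have [c [_ Hc]] := MVT_gen F 2 r (fun _ => 0) H1 H2.
  move: Hc; rewrite Rmult_0_l; lra.
have HC3 : forall r, 2 <= r -> Rabs (F 2) <= (2 * PI - 0) * (B / r).
  move=> r Hr; rewrite -(HB2 r Hr); apply: abs_RInt_le_const;
  [have := PI_RGT_0; lra | apply: Hint; lra | move=> t _; exact: HB].
have HB0 : 0 <= B.
  have := HB 2 0 (Rle_refl _); have := Rabs_pos (fst (P (polar 2 0))); move=> H1 H2.
  have : 0 <= B / 2 by lra. move=> H3; lra.
case: (Req_dec (F 2) 0) => // Hne.
have Hpos : 0 < Rabs (F 2) by apply: Rabs_pos_lt.
have HPI := PI_RGT_0.
pose r := 2 + 4 * PI * B / Rabs (F 2).
have Hr2 : 2 <= r.
  rewrite /r; have : 0 <= 4 * PI * B / Rabs (F 2).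
    apply: Rmult_le_pos; [nra|]; apply: Rlt_le; exact: Rinv_0_lt_compat.
  lra.
have := HC3 r Hr2.
have Hrp : 0 < r by lra.
have -> : (2 * PI - 0) * (B / r) = 2 * PI * B / r by field; lra.
move=> H; have H' : Rabs (F 2) * r <= 2 * PI * B.
  have := Rmult_le_compat_r r _ _ (Rlt_le _ _ Hrp) H.
  have -> : 2 * PI * B / r * r = 2 * PI * B by field; lra.
  done.
move: H'; rewrite /r.
have -> : Rabs (F 2) * (2 + 4 * PI * B / Rabs (F 2)) = 2 * Rabs (F 2) + 4 * PI * B by field; lra.
nra.
Qed.


Lemma Nm_ge0 z : 0 <= Nm z.
Proof. rewrite /Nm; nra. Qed.

Lemma Nm_mul z w : Nm (Cmul z w) = Nm z * Nm w.
Proof. rewrite /Nm /Cmul /=; ring. Qed.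

Lemma Nm_inv z : Nm z <> 0 -> Nm (Cinv z) = / Nm z.
Proof. rewrite /Nm /Cinv /= => H; field. exact: H. Qed.

Lemma Nm_exp z : Nm (Cexp z) = exp (fst z) * exp (fst z).
Proof.
rewrite /Nm /Cexp /=; have := sin2_cos2 (snd z); rewrite /Rsqr => E.
transitivity (exp (fst z) * exp (fst z) * (sin (snd z) * sin (snd z) + cos (snd z) * cos (snd z))); first ring.
rewrite E; ring.
Qed.

Lemma Nm_pown z n : Nm (Cpown z n) = Nm z ^ n.
Proof. elim: n => [|n IH] /=; first by rewrite /Nm /Defs.C1 /=; ring. by rewrite Nm_mul IH. Qed.

Lemma Nm_powz z r : Nm z <> 0 -> Nm (Cpowz z r) = powerRZ (Nm z) r.
Proof.
move=> H; case: r => [|p|p] /=.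
- rewrite /Nm /Defs.C1 /=; ring.
- exact: Nm_pown.
- rewrite Nm_inv Nm_pown //; apply: pow_nonzero; exact: H.
Qed.

Lemma abs_fst z : Rabs (fst z) <= sqrt (Nm z).
Proof. rewrite -sqrt_Rsqr_abs; apply: sqrt_le_1_alt; rewrite /Rsqr /Nm; nra. Qed.
Lemma abs_snd z : Rabs (snd z) <= sqrt (Nm z).
Proof. rewrite -sqrt_Rsqr_abs; apply: sqrt_le_1_alt; rewrite /Rsqr /Nm; nra. Qed.

Lemma sqrt_le_b a b : 0 <= b -> a <= b * b -> sqrt a <= b.
Proof. move=> Hb H; rewrite -(sqrt_square b Hb); exact: sqrt_le_1_alt. Qed.

Lemma powerRZ_ge1 x n : 1 <= x -> 1 <= powerRZ x (Z.of_nat n).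
Proof. move=> H; rewrite -pow_powerRZ; exact: pow_R1_Rle. Qed.

Lemma powerRZ_mono x a b : 1 <= x -> (a <= b)%Z -> powerRZ x a <= powerRZ x b.
Proof.
move=> Hx Hab.
have -> : b = (a + Z.of_nat (Z.to_nat (b - a)))%Z by rewrite Z2Nat.id; lia.
rewrite powerRZ_add; last lra.
have H1 := powerRZ_ge1 (Z.to_nat (b - a)) Hx.
have H2 := powerRZ_le x a (Rlt_le_trans _ _ _ Rlt_0_1 Hx).
nra.
Qed.

Lemma powerRZ_comb x r E G : 0 < x ->
  powerRZ x r * x * / (x ^ E * x ^ G) = powerRZ x (r + 1 - Z.of_nat E - Z.of_nat G).
Proof.
move=> Hx; have Hx0 : x <> 0 by lra.
have -> : (r + 1 - Z.of_nat E - Z.of_nat G = ((r + 1) + - Z.of_nat E) + - Z.of_nat G)%Z by lia.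
rewrite !powerRZ_add // !powerRZ_neg' -!pow_powerRZ powerRZ_1.
field; split; apply: pow_nonzero; exact: Hx0.
Qed.

Definition Pint t1 t2 r E G := fun u => Cmul (integrand t1 t2 r E G u) u.

Lemma Nm_polar rho t : Nm (polar rho t) = rho * rho.
Proof.
rewrite /Nm /polar /=; have := sin2_cos2 t; rewrite /Rsqr => E.
transitivity (rho * rho * (sin t * sin t + cos t * cos t)); first ring. rewrite E; ring.
Qed.

Lemma Nm_sub1 rho t : 2 <= rho -> rho * rho / 4 <= Nm (Csub (polar rho t) Defs.C1).
Proof.
move=> H; rewrite /Nm /polar /Csub /Cadd /Copp /Defs.C1 /=.
have := sin2_cos2 t; rewrite /Rsqr => E. have := COS_bound t => -[c1 c2].
nra.
Qed.

Lemma Nm_add1 rho t : 2 <= rho -> rho * rho / 4 <= Nm (Cadd (polar rho t) Defs.C1).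
Proof.
move=> H; rewrite /Nm /polar /Cadd /Defs.C1 /=.
have := sin2_cos2 t; rewrite /Rsqr => E. have := COS_bound t => -[c1 c2].
nra.
Qed.

Lemma fst_div_le t z : 1 <= Nm z -> fst (Cdiv t z) <= sqrt (Nm t).
Proof.
move=> Hz.
have Hz0 : Nm z <> 0 by lra.
apply: Rle_trans (Rle_abs _) _; apply: Rle_trans (abs_fst _) _.
apply: sqrt_le_1_alt; rewrite /Cdiv Nm_mul Nm_inv //.
have H0 := Nm_ge0 t.
have : / Nm z <= 1.
  rewrite -Rinv_1; apply: Rinv_le_contravar; lra.
have : 0 <= / Nm z by apply: Rlt_le; apply: Rinv_0_lt_compat; lra.
nra.
Qed.

Lemma Pint_Nm_bound t1 t2 r E G rho t : (r - Z.of_nat E - Z.of_nat G <= -2)%Z -> 2 <= rho ->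
  Nm (Pint t1 t2 r E G (polar rho t)) <=
  exp (sqrt (Nm t1) + sqrt (Nm t2)) * exp (sqrt (Nm t1) + sqrt (Nm t2)) * 4 ^ (E + G) * / (rho * rho).
Proof.
move=> Hd Hr.
set u := polar rho t. set x := rho * rho. set S := sqrt (Nm t1) + sqrt (Nm t2).
have Hx4 : 4 <= x by rewrite /x; nra.
have Hxp : 0 < x by lra.
have Hnu : Nm u = x by rewrite /u Nm_polar.
have Ha := Nm_sub1 t Hr. have Hb := Nm_add1 t Hr.
rewrite -/u -/x in Ha Hb.
set a := Nm (Csub u Defs.C1) in Ha *. set b := Nm (Cadd u Defs.C1) in Hb *.
have Ha1 : 1 <= a by lra. have Hb1 : 1 <= b by lra.
have Hq : fst (Cadd (Cdiv t1 (Csub u Defs.C1)) (Cdiv t2 (Cadd u Defs.C1))) <= S.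
  change (fst (Cdiv t1 (Csub u Defs.C1)) + fst (Cdiv t2 (Cadd u Defs.C1)) <= S); have := fst_div_le t1 Ha1; have := fst_div_le t2 Hb1; rewrite /S; lra.
set q := Cadd (Cdiv t1 (Csub u Defs.C1)) (Cdiv t2 (Cadd u Defs.C1)) in Hq *.
have Hexp : exp (fst q) * exp (fst q) <= exp S * exp S.
  have H : exp (fst q) <= exp S.
    case: (Rle_lt_or_eq_dec _ _ Hq) => [h|->]; [left; exact: exp_increasing|right; reflexivity].
  have := exp_pos (fst q); nra.
have HaE : 0 < a ^ E by apply: pow_lt; lra.
have HbG : 0 < b ^ G by apply: pow_lt; lra.
have HD : Nm (Cmul (Cpown (Csub u Defs.C1) E) (Cpown (Cadd u Defs.C1) G)) = a ^ E * b ^ G.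
  by rewrite Nm_mul !Nm_pown.
have HP : Nm (Pint t1 t2 r E G u) = powerRZ x r * (exp (fst q) * exp (fst q)) * / (a ^ E * b ^ G) * x.
  rewrite /Pint /integrand Nm_mul /Cdiv Nm_mul Nm_inv; last by rewrite HD; nra.
  rewrite HD Nm_mul Nm_powz; last lra.
  by rewrite Nm_exp Hnu -/q.
rewrite HP.
have Hinv : / (a ^ E * b ^ G) <= 4 ^ (E + G) * / (x ^ E * x ^ G).
  have Hx4E : 0 < (x / 4) ^ E by apply: pow_lt; lra.
  have Hx4G : 0 < (x / 4) ^ G by apply: pow_lt; lra.
  apply: Rle_trans (_ : / ((x / 4) ^ E * (x / 4) ^ G) <= _).
  { apply: Rinv_le_contravar; first nra.
    apply: Rmult_le_compat; try lra; apply: pow_incr; lra. }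
  { have e1 : forall n, (x / 4) ^ n = x ^ n * / 4 ^ n.
      by move=> n; rewrite /Rdiv Rpow_mult_distr pow_inv.
    rewrite !e1 pow_add.
    right; field; repeat split; apply: pow_nonzero; lra. }
have Hpz := powerRZ_comb r E G Hxp.
have Hm : powerRZ x (r + 1 - Z.of_nat E - Z.of_nat G) <= / x.
  have -> : / x = powerRZ x (-1) by rewrite /= Rmult_1_r.
  apply: powerRZ_mono; [lra|lia].
have Hpr := powerRZ_le x r Hxp.
have He0 : 0 <= exp (fst q) * exp (fst q) by have := exp_pos (fst q); nra.
have H4 : 0 < 4 ^ (E + G) by apply: pow_lt; lra.
have Hxi : 0 <= / (x ^ E * x ^ G).
  apply: Rlt_le; apply: Rinv_0_lt_compat; apply: Rmult_lt_0_compat; apply: pow_lt; lra.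
have Hai : 0 <= / (a ^ E * b ^ G) by apply: Rlt_le; apply: Rinv_0_lt_compat; nra.
apply: Rle_trans (_ : powerRZ x r * (exp S * exp S) * (4 ^ (E + G) * / (x ^ E * x ^ G)) * x <= _).
- apply: Rmult_le_compat_r; first lra.
  apply: Rmult_le_compat; try nra.
- have -> : powerRZ x r * (exp S * exp S) * (4 ^ (E + G) * / (x ^ E * x ^ G)) * x =
            exp S * exp S * 4 ^ (E + G) * (powerRZ x r * x * / (x ^ E * x ^ G)) by ring.
  rewrite Hpz; apply: Rmult_le_compat_l; last exact: Hm.
  have := exp_pos S; nra.
Qed.

Lemma Pint_bound t1 t2 r E G : (r - Z.of_nat E - Z.of_nat G <= -2)%Z ->
  exists B, forall rho t, 2 <= rho ->
    Rabs (fst (Pint t1 t2 r E G (polar rho t))) <= B / rho /\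
    Rabs (snd (Pint t1 t2 r E G (polar rho t))) <= B / rho.
Proof.
move=> Hd.
set C := exp (sqrt (Nm t1) + sqrt (Nm t2)) * exp (sqrt (Nm t1) + sqrt (Nm t2)) * 4 ^ (E + G).
exists (sqrt C) => rho t Hr.
have H := Pint_Nm_bound t1 t2 t Hd Hr; rewrite -/C in H.
have Hs : sqrt (Nm (Pint t1 t2 r E G (polar rho t))) <= sqrt C / rho.
  apply: sqrt_le_b.
  { apply: Rmult_le_pos; [exact: sqrt_pos|]; apply: Rlt_le; apply: Rinv_0_lt_compat; lra. }
  { have HC : 0 <= C.
      rewrite /C; apply: Rmult_le_pos; [|apply: pow_le; lra].
      have := exp_pos (sqrt (Nm t1) + sqrt (Nm t2)); nra.
    have -> : sqrt C / rho * (sqrt C / rho) = (sqrt C * sqrt C) * / (rho * rho) by field; lra.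
    by rewrite sqrt_sqrt. }
split; [exact: Rle_trans (abs_fst _) Hs|exact: Rle_trans (abs_snd _) Hs].
Qed.


Lemma RInt_link f a b : ex_RInt f a b -> Defs.RInt f a b = RInt f a b.
Proof.
move=> H; have pr := ex_RInt_Reals_0 _ _ _ H.
rewrite /Defs.RInt.
have Hex : exists v, exists pr : Riemann_integrable f a b, RiemannInt pr = v.
  by exists (RiemannInt pr); exists pr.
have [pr' <-] := epsilon_spec (inhabits R0) _ Hex.
by rewrite (RInt_Reals f a b pr').
Qed.

Lemma Hol_exRInt P P' : Hol UU P P' ->
  ex_RInt (fun t => fst (P (polar 2 t))) 0 (2 * PI) /\
  ex_RInt (fun t => snd (P (polar 2 t))) 0 (2 * PI).
Proof.
move=> [HD _].
have HT : forall t, CD (fun s => P (polar 2 s)) t (Cmul (P' (polar 2 t)) (- (2 * sin t), 2 * cos t)).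
  move=> t; apply: HD; [apply: polar_UU; lra|exact: CD_polar_t].
split; apply: ex_RInt_continuous => z _; apply: ex_derive_continuous; eexists.
- exact: (HT z).1.
- exact: (HT z).2.
Qed.

Lemma contour_snd (P P' : Cplx -> Cplx) B : Hol UU P P' ->
  (forall r t, 2 <= r -> Rabs (snd (P (polar r t))) <= B / r) ->
  RInt (fun t => snd (P (polar 2 t))) 0 (2 * PI) = 0.
Proof.
move=> H HB.
have H2 := Hol_mul (Hol_const UU (0, -1)) H.
have E : forall z, fst (Cmul (0, -1) z) = snd z by move=> z; rewrite /Cmul /=; ring.
have := contour_fst H2 (B := B) _.
have -> : (fun t => fst (Cmul (0, -1) (P (polar 2 t)))) = (fun t => snd (P (polar 2 t))).
  by apply: functional_extensionality => t; rewrite E.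
apply; move=> r t Hr; rewrite E; exact: HB.
Qed.

Lemma Iint_zero t1 t2 r E G : (r - Z.of_nat E - Z.of_nat G <= -2)%Z -> Iint t1 t2 r E G = C0.
Proof.
move=> Hd.
have [P' HP] := Hol_integrand t1 t2 r E G.
have [B HB] := Pint_bound t1 t2 Hd.
have [e1 e2] := Hol_exRInt HP.
rewrite /Iint /contour_int2 /C0.
change (fun th => fst (Cmul (integrand t1 t2 r E G (circ th)) (circ th)))
  with (fun th => fst (Pint t1 t2 r E G (polar 2 th))).
change (fun th => snd (Cmul (integrand t1 t2 r E G (circ th)) (circ th)))
  with (fun th => snd (Pint t1 t2 r E G (polar 2 th))).
rewrite !RInt_link //.
rewrite (contour_fst HP (B := B)); last by move=> rr tt Hr; exact: (HB rr tt Hr).1.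
rewrite (contour_snd HP (B := B)); last by move=> rr tt Hr; exact: (HB rr tt Hr).2.
by rewrite /Rdiv Rmult_0_l.
Qed.


Close Scope R_scope.

Lemma CaddA : associative Cadd.
Proof. move=> a b c; apply: cplx_eq; rewrite /Cadd /=; ring. Qed.
Lemma CaddC : commutative Cadd.
Proof. move=> a b; apply: cplx_eq; rewrite /Cadd /=; ring. Qed.
Lemma Cadd0l : left_id C0 Cadd.
Proof. move=> a; apply: cplx_eq; rewrite /Cadd /C0 /=; ring. Qed.
HB.instance Definition _ := Monoid.isComLaw.Build Cplx C0 Cadd CaddA CaddC Cadd0l.

Lemma CmulA : associative Cmul.
Proof. move=> a b c; apply: cplx_eq; rewrite /Cmul /=; ring. Qed.
Lemma CmulC : commutative Cmul.
Proof. move=> a b; apply: cplx_eq; rewrite /Cmul /=; ring. Qed.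
Lemma Cmul1l : left_id Defs.C1 Cmul.
Proof. move=> a; apply: cplx_eq; rewrite /Cmul /Defs.C1 /=; ring. Qed.
HB.instance Definition _ := Monoid.isComLaw.Build Cplx Defs.C1 Cmul CmulA CmulC Cmul1l.

Lemma Cmul0l z : Cmul C0 z = C0.
Proof. apply: cplx_eq; rewrite /Cmul /C0 /=; ring. Qed.

Lemma Cdet_zero_terms n (A : 'I_n -> 'I_n -> Cplx) :
  (forall s : 'S_n, exists i, A i (s i) = C0) -> Cdet A = C0.
Proof.
move=> H; rewrite /Cdet; apply: big1 => s _.
have [i Hi] := H s.
rewrite (bigD1 i) //= Hi Cmul0l.
apply: cplx_eq; rewrite /Cmul /C0 /=; ring.
Qed.

Lemma Copp_add a b : Copp (Cadd a b) = Cadd (Copp a) (Copp b).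
Proof. apply: cplx_eq; rewrite /Cadd /Copp /=; ring. Qed.
Lemma Copp0 : Copp C0 = C0.
Proof. apply: cplx_eq; rewrite /Copp /C0 /=; ring. Qed.

Lemma Cdet_eq_rows n (A : 'I_n -> 'I_n -> Cplx) (i1 i2 : 'I_n) :
  i1 != i2 -> (forall j, A i1 j = A i2 j) -> Cdet A = C0.
Proof.
move=> Hne Hrow.
set t := tperm i1 i2.
have HA : forall i j, A (t i) j = A i j.
  move=> i j; rewrite /t; case: tpermP => [->|->|] //; by rewrite Hrow.
have Hterm : forall s : 'S_n,
  Cmul (if odd_perm (t * s)%g then Copp Defs.C1 else Defs.C1) (\big[Cmul/Defs.C1]_(i < n) A i ((t * s)%g i))
  = Copp (Cmul (if odd_perm s then Copp Defs.C1 else Defs.C1) (\big[Cmul/Defs.C1]_(i < n) A i (s i))).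
  move=> s.
  have Hp : \big[Cmul/Defs.C1]_(i < n) A i ((t * s)%g i) = \big[Cmul/Defs.C1]_(i < n) A i (s i).
    rewrite (reindex_inj (@perm_inj _ t)) /=.
    apply: eq_bigr => i _; rewrite permM -HA.
    by rewrite /t tpermK.
  rewrite Hp odd_permM odd_tperm Hne /=.
  case: (odd_perm s) => /=; apply: cplx_eq; rewrite /Cmul /Copp /Defs.C1 /=; ring.
have HS : Cdet A = Copp (Cdet A).
  rewrite {1}/Cdet (reindex_inj (@mulgI _ t)) /=.
  rewrite (eq_bigr _ (fun s _ => Hterm s)).
  rewrite /Cdet; symmetry; apply: (big_morph Copp Copp_add Copp0).
move: HS; case: (Cdet A) => x y [] H1 H2; rewrite /C0; f_equal; lra.
Qed.


Lemma sorted_ge (s : seq nat) m : sorted ltn s -> all (leq m) s ->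
  forall k, k < size s -> m + k <= nth 0 s k.
Proof.
elim: s m => [//|x s IH] m /= Hs /andP [Hmx Hall] [|k] Hk /=.
- by rewrite addn0.
- have Hp := order_path_min ltn_trans Hs.
  have Hs' : sorted ltn s by move: Hs; case: s {IH Hk Hall Hp} => //= y s /andP [].
  have Hall' : all (leq m.+1) s.
    apply/allP => y Hy; have := allP Hp y Hy => Hxy.
    by apply: leq_ltn_trans Hmx Hxy.
  have := IH m.+1 Hs' Hall' k Hk.
  by rewrite addSnnS.
Qed.

Lemma distinct_sum n (a : 'I_n -> nat) : injective a ->
  (\sum_(i < n) i <= \sum_(i < n) a i) /\
  (\sum_(i < n) a i = \sum_(i < n) i -> forall k, k < n -> exists i, a i = k).
Proof.
move=> Ha.
set s := sort leq [seq a i | i <- enum 'I_n].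
have Hperm : perm_eq s [seq a i | i <- enum 'I_n] by rewrite /s perm_sort.
have Hsz : size s = n by rewrite (perm_size Hperm) size_map size_enum_ord.
have Hu : uniq s by rewrite (perm_uniq Hperm) map_inj_uniq // enum_uniq.
have Hsort : sorted ltn s by rewrite ltn_sorted_uniq_leq Hu /=; apply: sort_sorted; exact: leq_total.
have Hge : forall k, k < n -> k <= nth 0 s k.
  move=> k Hk; rewrite -Hsz in Hk.
  have := sorted_ge (m := 0) Hsort _ Hk; rewrite add0n; apply.
  by apply/allP.
have Hsum : \sum_(i < n) a i = \sum_(k < n) nth 0 s k.
  have -> : \sum_(k < n) nth 0 s k = \sum_(x <- s) x.
    by rewrite (big_nth 0) Hsz big_mkord.
  rewrite (perm_big _ Hperm) big_map.
  by rewrite enumT.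
rewrite Hsum.
have Hle : forall k : 'I_n, true -> k <= nth 0 s k ?= iff (k == nth 0 s k :> nat).
  by move=> k _; apply: leqif_eq; apply: Hge.
have L := leqif_sum Hle.
split; first exact: L.
move=> Heq k Hk.
have HF := L.2; rewrite Heq eqxx in HF.
move/esym/forallP: HF => /(_ (Ordinal Hk)) /= /eqP Hkk.
have : k \in s by rewrite Hkk mem_nth // Hsz.
rewrite (perm_mem Hperm) => /mapP [i _ ->].
by exists i.
Qed.


HB.instance Definition _ := SemiGroup.isComLaw.Build Z Z.max Z.max_assoc Z.max_comm.
HB.instance Definition _ := Monoid.isComLaw.Build Z 0%Z Z.add Z.add_assoc Z.add_comm Z.add_0_l.

Lemma zmax_spec n (F : 'I_n -> Z) x0 : (exists i, x0 = F i) ->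
  (forall i, (F i <= \big[Z.max/x0]_(i < n) F i)%Z) /\ exists i, \big[Z.max/x0]_(i < n) F i = F i.
Proof.
move=> Hx0; split.
- move=> i; rewrite (big_rem_AC _ _ _ _ (mem_index_enum i)) /=; exact: Z.le_max_l.
- apply: (big_ind (fun x => exists i, x = F i)) => //.
  + move=> x y [i ->] [j ->]; case: (Z.max_spec (F i) (F j)) => [[_ ->]|[_ ->]]; eauto.
  + move=> i _; by exists i.
Qed.

Lemma col_deg_spec n (r c : 'I_n -> Z) (E G : 'I_n -> nat) (j : 'I_n) :
  (forall i, (entry_deg r c E G i j <= col_deg r c E G j)%Z) /\
  exists i, col_deg r c E G j = entry_deg r c E G i j.
Proof.
rewrite /col_deg; case Hen : (enum 'I_n) => [|i0 l].
- have := mem_enum 'I_n j; rewrite Hen in_nil; by [].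
- apply: zmax_spec; by exists i0.
Qed.

Lemma sumZ_nat n (f : 'I_n -> nat) :
  Z.of_nat (\sum_(i < n) f i) = \big[Z.add/0%Z]_(i < n) Z.of_nat (f i).
Proof. apply: (big_morph Z.of_nat Nat2Z.inj_add); reflexivity. Qed.

Lemma sum_tri n : (2 * Z.of_nat (\sum_(i < n) i) = Z.of_nat n * (Z.of_nat n - 1))%Z.
Proof.
elim: n => [|n IH]; first by rewrite big_ord0.
rewrite big_ord_recr Nat2Z.inj_add Nat2Z.inj_succ (eq_bigr (fun i : 'I_n => nat_of_ord i)) // Z.mul_add_distr_l IH; change (Z.of_nat (@ord_max n)) with (Z.of_nat n); nia.
Qed.

Lemma sum_const_m1 n : \big[Z.add/0%Z]_(i < n) (-1)%Z = (- Z.of_nat n)%Z.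
Proof. rewrite big_const_ord; elim: n => [//|n IH]; rewrite iterS IH; lia. Qed.

Lemma sumZ_le n (F G : 'I_n -> Z) : (forall i, (F i <= G i)%Z) ->
  (\big[Z.add/0%Z]_(i < n) F i <= \big[Z.add/0%Z]_(i < n) G i)%Z.
Proof.
move=> H; apply: (big_ind2 (fun x y => (x <= y)%Z)); [lia|move=> x1 x2 y1 y2 h1 h2; lia|done].
Qed.

Lemma sumZ_eq n (F G : 'I_n -> Z) : (forall i, (F i <= G i)%Z) ->
  \big[Z.add/0%Z]_(i < n) F i = \big[Z.add/0%Z]_(i < n) G i -> forall i, F i = G i.
Proof.
move=> H Heq i; apply: NNPP => Hne.
move: Heq; rewrite (bigD1 i (P := predT)) //= (bigD1 i (P := predT)) //=.
match goal with |- (_ + ?a = _ + ?b)%Z -> _ =>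
  have A1 : (a <= b)%Z by
    apply: (big_ind2 (fun x y => (x <= y)%Z)); [lia|move=> x1 x2 y1 y2 /= h1 h2; lia|move=> j _; exact: H]
end.
have := H i; lia.
Qed.


Theorem mainTheorem7 (K : nat) (t1 t2 : Cplx)
  (r c : 'I_(2 * K) -> Z) (E G : 'I_(2 * K) -> nat) :
  (1 <= K)%N ->
  let M := fun i j : 'I_(2 * K) => Iint t1 t2 (c j + r i)%Z (E j) (G j) in
  ((tot_deg r c E G < 2 * Z.of_nat K ^ 2 - 3 * Z.of_nat K)%Z -> Cdet M = C0) /\
  (tot_deg r c E G = (2 * Z.of_nat K ^ 2 - 3 * Z.of_nat K)%Z -> Cdet M <> C0 ->
   exists s : 'S_(2 * K), forall k : 'I_(2 * K),
     col_deg r c E G (s k) = (Z.of_nat (nat_of_ord k) - 1)%Z).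
Proof.
move=> HK M.
have Hn : (0 < 2 * K)%N by rewrite muln_gt0 HK.
pose i0 : 'I_(2 * K) := Ordinal Hn.
have [Hmax [im Him]] := zmax_spec (F := r) (ex_intro (fun i => r i0 = r i) i0 erefl).
set Rm := \big[Z.max/r i0]_(i < 2 * K) r i in Hmax Him.
have Dform : forall j, col_deg r c E G j = (c j + r im - Z.of_nat (E j) - Z.of_nat (G j))%Z.
  move=> j; have [Hle [i Hi]] := col_deg_spec r c E G j.
  have := Hle im; have := Hmax i; rewrite Hi /entry_deg; lia.
have Van : forall i j, (col_deg r c E G j < r im - r i - 1)%Z -> M i j = C0.
  move=> i j; rewrite Dform /M => H; apply: Iint_zero; lia.
have Hkey : Cdet M <> C0 ->
  (2 * Z.of_nat K ^ 2 - 3 * Z.of_nat K <= tot_deg r c E G)%Z /\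
  (tot_deg r c E G = (2 * Z.of_nat K ^ 2 - 3 * Z.of_nat K)%Z ->
   exists s : 'S_(2 * K), forall k : 'I_(2 * K),
     col_deg r c E G (s k) = (Z.of_nat (nat_of_ord k) - 1)%Z).
{ move=> Hnz.
  have Hinj : forall i1 i2, r i1 = r i2 -> i1 = i2.
    move=> i1 i2 Hr; apply/eqP; apply: contraT => Hne; exfalso; apply: Hnz.
    apply: (Cdet_eq_rows Hne) => j; by rewrite /M Hr.
  have [s Hs] : exists s : 'S_(2 * K), forall i, M i (s i) <> C0.
    apply: NNPP => H; apply: Hnz; apply: Cdet_zero_terms => s.
    apply: NNPP => H2; apply: H; exists s => i Hi; apply: H2; by exists i.
  have Hb : forall i, (r im - r i - 1 <= col_deg r c E G (s i))%Z.
    move=> i; case: (Z_lt_le_dec (col_deg r c E G (s i)) (r im - r i - 1)) => // Hlt.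
    exfalso; exact: Hs i (Van _ _ Hlt).
  pose b i := Z.to_nat (r im - r i).
  have Hbz : forall i, Z.of_nat (b i) = (r im - r i)%Z.
    move=> i; rewrite /b Z2Nat.id //; have := Hmax i; lia.
  have binj : injective b.
    move=> i1 i2 H; apply: Hinj; have := Hbz i1; have := Hbz i2; rewrite H; lia.
  have [C1' C2'] := distinct_sum binj.
  have T1 : tot_deg r c E G = \big[Z.add/0%Z]_(i < 2 * K) col_deg r c E G (s i).
    by rewrite /tot_deg (reindex_inj (@perm_inj _ s)).
  have T3 : \big[Z.add/0%Z]_(i < 2 * K) (Z.of_nat (b i) + -1)%Z =
            (Z.of_nat (\sum_(i < 2 * K) b i) - Z.of_nat (2 * K))%Z.
    by rewrite big_split /= sum_const_m1 sumZ_nat Z.add_opp_r.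
  have T2 : (\big[Z.add/0%Z]_(i < 2 * K) (Z.of_nat (b i) + -1)%Z <=
             \big[Z.add/0%Z]_(i < 2 * K) col_deg r c E G (s i))%Z.
    apply: sumZ_le => i; rewrite Hbz; have := Hb i; lia.
  have Tri := sum_tri (2 * K).
  have Cz : (Z.of_nat (\sum_(i < 2 * K) i) <= Z.of_nat (\sum_(i < 2 * K) b i))%Z.
    by apply/Nat2Z.inj_le/leP.
  rewrite Nat2Z.inj_mul in Tri T3.
  split.
  - rewrite T1; nia.
  - move=> Htot.
    have Hsb : \sum_(i < 2 * K) b i = \sum_(i < 2 * K) i.
      apply: Nat2Z.inj; rewrite T1 in Htot; nia.
    have Hall := C2' Hsb.
    have Heqs : forall i, (Z.of_nat (b i) + -1)%Z = col_deg r c E G (s i).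
      apply: sumZ_eq; [move=> i; rewrite Hbz; have := Hb i; lia|].
      rewrite T1 in Htot; rewrite Htot; nia.
    have Hpick : forall k : 'I_(2 * K), b (odflt k [pick i | b i == k]) = k.
      move=> k; case: pickP => [i /eqP //|H].
      have [i Hi] := Hall k (ltn_ord k); by have := H i; rewrite Hi eqxx.
    pose f (k : 'I_(2 * K)) := s (odflt k [pick i | b i == k]).
    have finj : injective f.
      move=> k1 k2 /perm_inj H; apply: ord_inj; by rewrite -(Hpick k1) -(Hpick k2) H.
    exists (perm finj) => k; rewrite permE /f -Heqs Hpick; lia. }
split.
- move=> Hlt; case: (classic (Cdet M = C0)) => // Hnz.
  have := (Hkey Hnz).1; lia.
- move=> Heq Hnz; exact: (Hkey Hnz).2 Heq.
Qed.
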